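(* Let $f:\mathbb{R}^n\to\mathbb{R}^n$ be a polynomial vector field (each component $f_j$ is a polynomial in $x=(x_1,\ldots,x_n)$ with real coefficients), and let $G$ be the weighted dependency graph of $f$. Suppose that for every cycle $c$ of $G$, the weight $\gamma_c$ is a constant function of $x$. Then $f$ is super-linearizable, i.e., the system $\dot x(t)=f(x(t))$ admits a super-linearization.
   Context: Weighted dependency graph: for a differentiable $f:\mathbb{R}^n\to\mathbb{R}^n$, $G$ is the directed graph (self-loops allowed) on nodes $v_1,\ldots,v_n$ where, with $\gamma_{ij}(x):=\frac{\partial f_j(x)}{\partial x_i}$ for $1\le i,j\le n$, there is a directed edge $v_iv_j$ (from $v_i$ to $v_j$; a self-loop if $i=j$) precisely when $\gamma_{ij}$ is not identically zero, and this edge has weight $\gamma_{ij}$. A cycle is a closed walk $c=v_{i_1}v_{i_2}\cdots v_{i_k}v_{i_1}$ ($k\ge 1$, with $v_{i_1},\ldots,v_{i_k}$ distinct and consecutive nodes joined by edges of $G$; a self-loop is a cycle with $k=1$). For a walk $w=v_{j_1}v_{j_2}\cdots v_{j_r}$, its weight is $\gamma_w:=\prod_{s=1}^{r-1}\gamma_{j_sj_{s+1}}$. Super-linearization: let $\Pi:\mathbb{R}^{n+m}\to\mathbb{R}^n$ be the projection $\Pi(z)=(z_1,\ldots,z_n)$. A vector field $f:\mathbb{R}^n\to\mathbb{R}^n$ is super-linearizable if there exist an integer $m\ge 0$, a matrix $A\in\mathbb{R}^{(n+m)\times(n+m)}$, a vector $D\in\mathbb{R}^{n+m}$ and an injective map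 $p:\mathbb{R}^n\to\mathbb{R}^m$ (the observables) such that for all $x_0\in\mathbb{R}^n$ and all $t$, $\Pi\big(e^{t(Az+D)}z_0\big)=e^{tf}x_0$ where $z_0=(x_0,p(x_0))$. Here $e^{tg}y_0$ denotes the solution at time $t$ of $\dot y=g(y)$ with initial state $y_0$. *)

(* Defs.v *)
From HB Require Import structures.
From mathcomp Require Import all_boot all_order all_algebra.
From mathcomp Require Import mpoly.
From mathcomp Require Import Rstruct.
From Stdlib Require Import Reals.

Set Implicit Arguments.
Unset Strict Implicit.
Unset Printing Implicit Defensive.

Import Order.TTheory GRing.Theory Num.Theory.
Open Scope ring_scope.

Notation RR := Rdefinitions.R.

Definition polyVF (n : nat) := 'I_n -> mpoly n RR.

Definition evalVF (n : nat) (f : polyVF n) (x : 'cV[RR]_n) : 'cV[RR]_n :=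
  \col_(j < n) meval (fun k => x k ord0) (f j).

Definition gamma (n : nat) (f : polyVF n) (i j : 'I_n) : mpoly n RR :=
  mderiv i (f j).

Definition dep_edge (n : nat) (f : polyVF n) : rel 'I_n :=
  fun i j => gamma f i j != 0.

(* A cycle v_{i_1} ... v_{i_k} v_{i_1} (k >= 1, distinct nodes, consecutive
   nodes and v_{i_k} v_{i_1} joined by edges), encoded by the sequence
   [:: i_1; ...; i_k]. *)
Definition is_cycle (n : nat) (f : polyVF n) (c : seq 'I_n) : bool :=
  [&& c != [::], uniq c & cycle (dep_edge f) c].

Definition cycle_weight (n : nat) (f : polyVF n) (c : seq 'I_n)
  (x : 'I_n -> RR) : RR :=
  \prod_(e <- zip c (rot 1 c)) meval x (gamma f e.1 e.2).

Definition solves_on (k : nat) (g : 'cV[RR]_k -> 'cV[RR]_k)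
  (y : RR -> 'cV[RR]_k) (a b : RR) : Prop :=
  forall t, a < t < b -> forall i : 'I_k,
    derivable_pt_lim (fun s => y s i ord0) t (g (y t) i ord0).

Definition proj_first (n m : nat) (z : 'cV[RR]_(n + m)) : 'cV[RR]_n :=
  usubmx z.

(* The flow e^{t(Az+D)} z0 is the (unique, global) solution z of the affine
   system z' = A z + D with z 0 = z0; the flow e^{tf} x0 is the solution x of
   x' = f(x), x 0 = x0, on any open interval ]a,b[ around 0 where it exists. *)
Definition super_linearizable (n : nat) (f : polyVF n) : Prop :=
  exists (m : nat) (A : 'M[RR]_(n + m)) (D : 'cV[RR]_(n + m))
         (p : 'cV[RR]_n -> 'cV[RR]_m),
    injective p /\
    forall (x0 : 'cV[RR]_n) (z : RR -> 'cV[RR]_(n + m)),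
      z 0 = col_mx x0 (p x0) ->
      (forall t, solves_on (fun w => A *m w + D) z (t - 1) (t + 1)) ->
      forall (x : RR -> 'cV[RR]_n) (a b : RR),
        a < 0 < b -> x 0 = x0 -> solves_on (evalVF f) x a b ->
        forall t, a < t < b -> proj_first (z t) = x t.

(* Main.v *)
Require Import Defs.
From HB Require Import structures.
From mathcomp Require Import all_boot all_order all_algebra.
From mathcomp Require Import mpoly.
From mathcomp Require Import Rstruct.
From Stdlib Require Import Reals.
Set Implicit Arguments.
Unset Strict Implicit.
Unset Printing Implicit Defensive.
Import Order.TTheory GRing.Theory Num.Theory.
Open Scope ring_scope.
From Stdlib Require Import FunctionalExtensionality.
From mathcomp Require Import ring lra.

Lemma digits_inj (D : nat) : forall k (a b : 'I_k -> nat),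
  (forall i, (a i < D)%nat) -> (forall i, (b i < D)%nat) ->
  (\sum_(i < k) a i * expn D i)%nat = (\sum_(i < k) b i * expn D i)%nat -> a =1 b.
Proof.
elim=> [|k IH] a b Ha Hb E i; first by case: i.
have D0 : (0 < D)%nat by apply: leq_ltn_trans (Ha ord0).
move: E; rewrite !big_ord_recl /= !muln1.
have hS c : (\sum_(i < k) c (lift ord0 i) * expn D (bump 0 i))%nat =
   ((\sum_(i < k) c (lift ord0 i) * expn D i) * D)%nat.
  rewrite big_distrl /=; apply: eq_bigr => j _.
  by rewrite /bump /= add1n expnS mulnCA mulnC.
rewrite !hS => E.
have E0 : a ord0 = b ord0.
  have := congr1 (fun x => x %% D)%nat E.
  by rewrite /= !(addnC (_ ord0)) !modnMDl !modn_small.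
have E1 := congr1 (fun x => x %/ D)%nat E.
rewrite /= !(addnC (_ ord0)) !divnMDl // !divn_small // !addn0 in E1.
have IH' := IH (fun j => a (lift ord0 j)) (fun j => b (lift ord0 j))
  (fun j => Ha _) (fun j => Hb _) E1.
case: (unliftP ord0 i) => [j ->|->] //.
Qed.

Lemma poly_eval0 (P : {poly RR}) : (forall t, P.[t] = 0) -> P = 0.
Proof.
move=> H; apply/eqP; apply/negPn/negP => nz.
pose rs := [seq (i%:R : RR) | i <- iota 0 (size P)].
have H1 : all (root P) rs by apply/allP => x _; rewrite /root H.
have H2 : uniq rs.
  rewrite map_inj_uniq ?iota_uniq //.
  by move=> i j /eqP; rewrite eqr_nat => /eqP.
by have := max_poly_roots nz H1 H2; rewrite size_map size_iota ltnn.
Qed.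

Lemma mdeg_ge (n : nat) (m : 'X_{1..n}) i : (m i <= mdeg m)%nat.
Proof. by rewrite mdegE (bigD1 i) //= leq_addr. Qed.

Lemma mpoly_eval0 (n : nat) (p : {mpoly RR[n]}) :
  (forall v, meval v p = 0) -> p = 0.
Proof.
move=> H.
pose D := msize p.
pose e (m : 'X_{1..n}) := (\sum_(i < n) m i * expn D i)%nat.
pose P : {poly RR} := \sum_(m <- msupp p) p@_m *: 'X^(e m).
have HP : P = 0.
  apply: poly_eval0 => t.
  rewrite -(H (fun i => t ^+ (expn D i))) mevalE /P horner_sum.
  apply: eq_bigr => m _; rewrite hornerZ hornerXn; congr (_ * _).
  rewrite /e -prodrXr; apply: eq_bigr => i _.
  by rewrite -exprM mulnC.
have einj m1 m2 : m1 \in msupp p -> m2 \in msupp p -> e m1 = e m2 -> m1 = m2.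
  move=> h1 h2 E; apply/mnmP; apply: (digits_inj _ _ E) => i.
    by apply: leq_ltn_trans (mdeg_ge _ i) (msize_mdeg_lt h1).
  by apply: leq_ltn_trans (mdeg_ge _ i) (msize_mdeg_lt h2).
apply/mpolyP => m0; rewrite mcoeff0.
case: (boolP (m0 \in msupp p)) => [h0|]; last by move/memN_msupp_eq0.
have := congr1 (fun Q : {poly RR} => Q`_(e m0)) HP.
rewrite /P coef_sumMXn coef0 big_mkcond (bigD1_seq m0) ?msupp_uniq //= eqxx.
rewrite big_seq_cond big1 ?addr0 // => m /andP[hm hne]; case: eqP => // E.
by case/negP: hne; rewrite (einj _ _ hm h0 E).
Qed.

Lemma zip_path_edges (T : eqType) (e : rel T) (s : seq T) (x y : T) :
  path e x s -> e (last x s) y ->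
  forall pr, pr \in zip (x :: s) (rcons s y) -> e pr.1 pr.2.
Proof.
elim: s x => [|z s IH] x /=.
  by move=> _ exy pr; rewrite inE => /eqP ->.
move=> /andP[exz pz] el pr; rewrite inE => /orP[/eqP -> //|].
exact: IH.
Qed.

Lemma zip_last_mem (T : eqType) (s : seq T) (x y : T) :
  (last x s, y) \in zip (x :: s) (rcons s y).
Proof.
elim: s x => [|z s IH] x /=; first by rewrite inE.
by rewrite inE IH orbT.
Qed.

Lemma msize_gt0 (n : nat) (p : {mpoly RR[n]}) : p != 0 -> (0 < msize p)%nat.
Proof.
rewrite -msupp_eq0; case E: (msupp p) => [|m s] // _.
have : m \in msupp p by rewrite E inE eqxx.
by move/msize_mdeg_lt; apply: leq_ltn_trans.
Qed.

Lemma msize_prod_ge (n : nat) (T : eqType) (F : T -> {mpoly RR[n]}) (s : seq T) :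
  (forall y, y \in s -> F y != 0) ->
  \prod_(y <- s) F y != 0 /\
  forall y, y \in s -> (msize (F y) <= msize (\prod_(y <- s) F y))%nat.
Proof.
elim: s => [|a s IH] H.
  by rewrite big_nil oner_neq0; split.
have [nzP Hs] := IH (fun y hy => H y (mem_behead (s := a :: s) hy)).
have nza : F a != 0 by apply: H; rewrite inE eqxx.
rewrite big_cons; split; first by rewrite mulf_neq0.
rewrite msizeM // => y; rewrite inE => /orP[/eqP ->|hy].
  have := msize_gt0 nzP; case: (msize (\prod_(y <- s) F y)) => // k _.
  by rewrite addnS /= leq_addr.
have := Hs y hy; have := msize_gt0 nza; case: (msize (F a)) => // k _.
move=> h; apply: leq_trans h _; rewrite addSn /= leq_addl //.
Qed.

Lemma mderiv_coef_nz (n : nat) (p : {mpoly RR[n]}) (m : 'X_{1..n}) (i : 'I_n) :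
  m \in msupp p -> (0 < m i)%nat ->
  (mderiv i p)@_(m - U_(i))%MM != 0.
Proof.
move=> hm hi.
have le : (U_(i) <= m)%MM.
  by apply/mnm_lepP => k; rewrite mnm1E; case: eqP => [<-|].
rewrite mcoeff_mderiv submK // mnmBE mnm1E eqxx subn1 prednK //.
by rewrite mulrn_eq0 negb_or -lt0n hi mcoeff_eq0 negbK hm.
Qed.

Lemma edge_of_coef (n : nat) (f : polyVF n) j m i :
  m \in msupp (f j) -> (0 < m i)%nat -> dep_edge f i j.
Proof.
move=> hm hi; rewrite /dep_edge /gamma; apply/eqP => h0.
by have := mderiv_coef_nz hm hi; rewrite h0 mcoeff0 eqxx.
Qed.

Lemma key_noconnect (n : nat) (f : polyVF n) :
  (forall c : seq 'I_n, is_cycle f c ->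
     exists k : RR, forall x : 'I_n -> RR, cycle_weight f c x = k) ->
  forall j i m, m \in msupp (f j) -> (0 < m i)%nat -> m != U_(i)%MM ->
  ~~ connect (dep_edge f) j i.
Proof.
move=> Hc j i m hm hi hne; apply/negP => /connectP [p0 pth0 last0].
case: (shortenP pth0) last0 => p pth uq _ lastp.
have eij : dep_edge f i j by exact: edge_of_coef hm hi.
pose c := j :: p.
have cyc : is_cycle f c.
  rewrite /is_cycle /c; apply/and3P; split => //.
  by rewrite /cycle rcons_path pth -lastp eij.
have [k Hk] := Hc c cyc.
pose Q := \prod_(e <- zip c (rot 1 c)) gamma f e.1 e.2.
have HQ : Q = k%:MP.
  apply/eqP; rewrite -subr_eq0; apply/eqP; apply: mpoly_eval0 => v.
  move: (Hk v); rewrite /cycle_weight => <-.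
  by rewrite mevalB mevalC /Q (big_morph _ (mevalM v) (meval1 v)) subrr.
have zipE : zip c (rot 1 c) = zip (j :: p) (rcons p j) by rewrite /c rot1_cons.
have edges : forall y, y \in zip c (rot 1 c) -> gamma f y.1 y.2 != 0.
  have el : dep_edge f (last j p) j by rewrite -lastp.
  move=> y; rewrite zipE => hy; exact: (zip_path_edges pth el hy).
have [_ Hge] := msize_prod_ge edges.
have mem : (i, j) \in zip c (rot 1 c) by rewrite zipE lastp zip_last_mem.
have := Hge _ mem; rewrite -/Q HQ msizeC /=.
have nz := mderiv_coef_nz hm hi.
have := msize_mdeg_lt (m := (m - U_(i))%MM) (p := gamma f i j).
rewrite mcoeff_msupp nz => /(_ isT).
have : (0 < mdeg (m - U_(i))%MM)%nat.
  rewrite lt0n mdeg_eq0; apply/negP => /eqP h.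
  have le : (U_(i) <= m)%MM.
    by apply/mnm_lepP => l; rewrite mnm1E; case: eqP => [<-|].
  by case/negP: hne; rewrite -(submK le) h add0m.
move=> h1 h2 h3; have := leq_ltn_trans h1 h2.
by move=> h4; have := leq_trans h4 h3; case: (k != 0).
Qed.

Definition anc (n : nat) (f : polyVF n) (j : 'I_n) : {set 'I_n} :=
  [set k | connect (dep_edge f) k j].
Definition rk (n : nat) (f : polyVF n) (j : 'I_n) : nat := #|anc f j|.
Definition Kb (n : nat) (f : polyVF n) : nat := (\max_(j < n) msize (f j)).+1.
Definition wt (n : nat) (f : polyVF n) (j : 'I_n) : nat := expn (Kb f) (rk f j).
Definition wd (n : nat) (f : polyVF n) (m : 'X_{1..n}) : nat :=
  (\sum_(i < n) m i * wt f i)%nat.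

Lemma wt_gt0 (n : nat) (f : polyVF n) j : (0 < wt f j)%nat.
Proof. by rewrite /wt expn_gt0. Qed.

Lemma rk_le (n : nat) (f : polyVF n) i j : dep_edge f i j -> (rk f i <= rk f j)%nat.
Proof.
move=> e; apply: subset_leq_card; apply/subsetP => k.
rewrite !inE => h; apply: connect_trans h (connect1 e).
Qed.

Lemma rk_lt (n : nat) (f : polyVF n) i j : dep_edge f i j ->
  ~~ connect (dep_edge f) j i -> (rk f i < rk f j)%nat.
Proof.
move=> e nc; apply: proper_card; apply/properP; split.
  apply/subsetP => k; rewrite !inE => h; apply: connect_trans h (connect1 e).
by exists j; rewrite !inE ?connect0.
Qed.

Lemma wdU (n : nat) (f : polyVF n) i : wd f U_(i)%MM = wt f i.
Proof.
rewrite /wd (bigD1 i) //= mnm1E eqxx mul1n big1 ?addn0 // => k hk.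
by rewrite mnm1E eq_sym (negbTE hk).
Qed.

Lemma wdD (n : nat) (f : polyVF n) m1 m2 : wd f (m1 + m2)%MM = (wd f m1 + wd f m2)%nat.
Proof. by rewrite /wd -big_split /=; apply: eq_bigr => i _; rewrite mnmDE mulnDl. Qed.

Lemma mdeg_le_wd (n : nat) (f : polyVF n) m : (mdeg m <= wd f m)%nat.
Proof.
rewrite mdegE /wd; apply: leq_sum => i _.
by rewrite -{1}(muln1 (m i)) leq_mul2l wt_gt0 orbT.
Qed.

Lemma W_bound (n : nat) (f : polyVF n) :
  (forall c : seq 'I_n, is_cycle f c ->
     exists k : RR, forall x : 'I_n -> RR, cycle_weight f c x = k) ->
  forall j m, m \in msupp (f j) -> (wd f m <= wt f j)%nat.
Proof.
move=> Hc j m hm.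
have K0 : (0 < Kb f)%nat by [].
have degK : (mdeg m <= Kb f)%nat.
  apply: ltnW; apply: leq_trans (msize_mdeg_lt hm) _.
  rewrite /Kb; apply: (leq_trans _ (leqnSn _)); exact: (leq_bigmax_cond j isT).
case: (boolP [exists i, m == U_(i)%MM]).
  case/existsP => i /eqP mE; rewrite mE wdU /wt.
  apply: leq_pexp2l => //; apply: rk_le.
  by apply: (edge_of_coef (m := m)) => //; rewrite mE mnm1E eqxx.
rewrite negb_exists => /forallP hne.
case: (boolP (m == 0%MM)) => [/eqP -> | nz].
  by rewrite /wd big1 // => i _; rewrite mnm0E mul0n.
have Hlt i : (0 < m i)%nat -> (rk f i < rk f j)%nat.
  move=> hi; apply: rk_lt; first exact: (edge_of_coef hm hi).
  exact: (key_noconnect Hc hm hi (hne i)).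
have [i0 hi0] : exists i, (0 < m i)%nat.
  case: (pickP (fun i => (0 < m i)%nat)) => [i hi|h]; first by exists i.
  case/negP: nz; apply/eqP/mnmP => i; rewrite mnm0E.
  by have := h i; rewrite lt0n => /negbFE/eqP.
have rj : (0 < rk f j)%nat by apply: leq_ltn_trans (Hlt _ hi0).
apply: (@leq_trans (mdeg m * expn (Kb f) (rk f j).-1)%nat).
  rewrite mdegE big_distrl /=; apply: leq_sum => i _.
  case: (posnP (m i)) => [-> //|hi].
  rewrite leq_mul2l leq_pexp2l ?orbT //.
  by rewrite -ltnS prednK // Hlt.
rewrite /wt -{2}(prednK rj) expnS leq_mul2r degK orbT //.
Qed.

Definition Wm (n : nat) (f : polyVF n) : nat := (\max_(j < n) wt f j)%nat.
Definition Obs (n : nat) (f : polyVF n) : finType :=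
  {m : 'X_{1..n < (Wm f).+1} | (wd f m <= Wm f)%nat}.
Definition mo (n : nat) (f : polyVF n) (o : Obs f) : 'X_{1..n} := val (val o).

Lemma mo_inj (n : nat) (f : polyVF n) : injective (@mo n f).
Proof. by move=> o1 o2 /val_inj /val_inj. Qed.

Lemma mo_wd (n : nat) (f : polyVF n) (o : Obs f) : (wd f (mo o) <= Wm f)%nat.
Proof. exact: (valP o). Qed.

Lemma obs_complete (n : nat) (f : polyVF n) (m : 'X_{1..n}) :
  (wd f m <= Wm f)%nat -> exists o : Obs f, mo o = m.
Proof.
move=> h.
have hb : (mdeg m < (Wm f).+1)%nat by rewrite ltnS; apply: leq_trans (mdeg_le_wd f m) h.
by exists (exist _ (BMultinom hb) h).
Qed.

Lemma obs_expand (n : nat) (f : polyVF n) (q : {mpoly RR[n]}) :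
  (forall m, m \in msupp q -> (wd f m <= Wm f)%nat) ->
  q = \sum_(o : Obs f) q@_(mo o) *: 'X_[mo o].
Proof.
move=> H; apply/mpolyP => m; rewrite raddf_sum /=.
under eq_bigr do rewrite mcoeffZ mcoeffX.
case: (boolP (wd f m <= Wm f)%nat) => [hm|hm].
  have [o0 E] := obs_complete hm.
  rewrite (bigD1 o0) //= E eqxx mulr1 big1 ?addr0 // => o ho.
  case: eqP => [E'|]; last by rewrite mulr0.
  by case/negP: ho; apply/eqP/mo_inj; rewrite E E'.
rewrite big1.
  apply: memN_msupp_eq0; apply/negP => /H; by rewrite (negbTE hm).
move=> o _; case: eqP => [E|]; last by rewrite mulr0.
by move: (mo_wd o); rewrite E (negbTE hm).
Qed.

Definition Lf (n : nat) (f : polyVF n) (mu : 'X_{1..n}) : {mpoly RR[n]} :=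
  \sum_(i < n) mderiv i 'X_[mu] * f i.

Lemma Lf_supp (n : nat) (f : polyVF n) :
  (forall c : seq 'I_n, is_cycle f c ->
     exists k : RR, forall x : 'I_n -> RR, cycle_weight f c x = k) ->
  forall mu nu, nu \in msupp (Lf f mu) -> (wd f nu <= wd f mu)%nat.
Proof.
move=> Hc mu nu /msupp_sum_le /flatten_mapP [i _].
rewrite mderivX.
case: (posnP (mu i)) => [->|hi].
  by rewrite scale0r mul0r msupp0.
rewrite -scalerAl => /msuppZ_le; rewrite mulrC (perm_mem (msuppMX _ _)).
case/mapP => m' hm' ->.
have le : (U_(i) <= mu)%MM.
  by apply/mnm_lepP => k; rewrite mnm1E; case: eqP => [<-|].
rewrite wdD -{2}(submK le) wdD wdU leq_add2l.
exact: (W_bound Hc hm').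
Qed.

Lemma dpl_ext (f g : RR -> RR) t l l' :
  (forall s, f s = g s) -> l = l' -> derivable_pt_lim f t l -> derivable_pt_lim g t l'.
Proof.
by move=> H <-; have -> : g = f by apply: functional_extensionality => s; rewrite H.
Qed.

Lemma dpl_const (c : RR) t : derivable_pt_lim (fun _ => c) t 0.
Proof. exact: derivable_pt_lim_const. Qed.

Lemma dpl_id t : derivable_pt_lim (fun s => s) t 1.
Proof. exact: derivable_pt_lim_id. Qed.

Lemma dpl_add (f g : RR -> RR) t a b :
  derivable_pt_lim f t a -> derivable_pt_lim g t b ->
  derivable_pt_lim (fun s => f s + g s) t (a + b).
Proof. move=> ha hb; exact: derivable_pt_lim_plus ha hb. Qed.

Lemma dpl_opp (f : RR -> RR) t a :
  derivable_pt_lim f t a -> derivable_pt_lim (fun s => - f s) t (- a).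
Proof. move=> ha; exact: derivable_pt_lim_opp ha. Qed.

Lemma dpl_sub (f g : RR -> RR) t a b :
  derivable_pt_lim f t a -> derivable_pt_lim g t b ->
  derivable_pt_lim (fun s => f s - g s) t (a - b).
Proof. move=> ha hb; exact: dpl_add ha (dpl_opp hb). Qed.

Lemma dpl_mul (f g : RR -> RR) t a b :
  derivable_pt_lim f t a -> derivable_pt_lim g t b ->
  derivable_pt_lim (fun s => f s * g s) t (a * g t + f t * b).
Proof. move=> ha hb; exact: derivable_pt_lim_mult ha hb. Qed.

Lemma dpl_sum (I : Type) (r : seq I) (F : I -> RR -> RR) (d : I -> RR) t :
  (forall i, derivable_pt_lim (F i) t (d i)) ->
  derivable_pt_lim (fun s => \sum_(i <- r) F i s) t (\sum_(i <- r) d i).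
Proof.
move=> H; elim: r => [|i r IH].
  apply: (dpl_ext (f := fun _ => 0)) (dpl_const 0 t) => [s|]; by rewrite big_nil.
apply: (dpl_ext _ _ (dpl_add (H i) IH)) => [s|]; by rewrite big_cons.
Qed.

Lemma dpl_exp (k : RR) t :
  derivable_pt_lim (fun s => exp (k * s)) t (k * exp (k * t)).
Proof.
have h1 : derivable_pt_lim (fun s => k * s) t k.
  apply: (dpl_ext _ _ (dpl_mul (dpl_const k t) (dpl_id t))) => [s|] //.
  by rewrite mul0r add0r mulr1.
have := derivable_pt_lim_comp (fun s => k * s) exp t k (exp (k * t)) h1
   (derivable_pt_lim_exp (k * t)).
apply: dpl_ext => [s|] //; by rewrite RmultE mulrC.
Qed.

Lemma CR (n : nat) (y : RR -> 'I_n -> RR) (d : 'I_n -> RR) t :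
  (forall i, derivable_pt_lim (fun s => y s i) t (d i)) ->
  forall q : {mpoly RR[n]},
  derivable_pt_lim (fun s => meval (y s) q) t
     (\sum_(i < n) meval (y t) (mderiv i q) * d i).
Proof.
move=> Hd.
pose P q := derivable_pt_lim (fun s => meval (y s) q) t
     (\sum_(i < n) meval (y t) (mderiv i q) * d i).
have PC c : P c%:MP.
  rewrite /P; apply: (dpl_ext _ _ (dpl_const c t)) => [s|]; first by rewrite mevalC.
  by rewrite big1 // => i _; rewrite mderivC meval0 mul0r.
have PD q1 q2 : P q1 -> P q2 -> P (q1 + q2).
  rewrite /P => h1 h2; apply: (dpl_ext _ _ (dpl_add h1 h2)) => [s|].
    by rewrite mevalD.
  by rewrite -big_split /=; apply: eq_bigr => i _; rewrite mderivD mevalD mulrDl.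
have PM q1 q2 : P q1 -> P q2 -> P (q1 * q2).
  rewrite /P => h1 h2; apply: (dpl_ext _ _ (dpl_mul h1 h2)) => [s|].
    by rewrite mevalM.
  rewrite big_distrl big_distrr /= -big_split /=; apply: eq_bigr => i _.
  rewrite mderivM mevalD !mevalM; ring.
have PX i : P 'X_i.
  rewrite /P; apply: (dpl_ext _ _ (Hd i)) => [s|]; first by rewrite mevalXU.
  rewrite (bigD1 i) //= big1 ?addr0.
    rewrite mderivX mnm1E eqxx mulr1n scale1r mevalX big1 ?mul1r // => k _.
    by rewrite mnmBE subnn expr0.
  by move=> k hk; rewrite mderivX mnm1E eq_sym (negbTE hk) scale0r meval0 mul0r.
move=> q; rewrite [q]mpolyE.
apply: (big_ind P); first by rewrite -mpolyC0; exact: PC.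
  exact: PD.
move=> m _; rewrite -mul_mpolyC; apply PM => //.
rewrite mpolyXE_id; apply: (big_ind P); first by rewrite -mpolyC1; exact: PC.
  exact: PM.
move=> i _; elim: (m i) => [|k IH]; first by rewrite expr0 -mpolyC1; exact: PC.
by rewrite exprS; apply PM.
Qed.

Lemma two_abs (x y : RR) : 2 * `|x| * `|y| <= x ^+ 2 + y ^+ 2.
Proof.
rewrite -[x ^+ 2]real_normK ?num_real // -[y ^+ 2]real_normK ?num_real //.
have h := sqr_ge0 (`|x| - `|y|); rewrite sqrrB in h. rewrite -mulrA. lra.
Qed.

Lemma sq_le_sum (N : nat) (v : 'I_N -> RR) r : v r ^+ 2 <= \sum_l v l ^+ 2.
Proof.
rewrite (bigD1 r) //= lerDl; apply: sumr_ge0 => l _; exact: sqr_ge0.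
Qed.

Lemma dE_bound (N : nat) (A : 'M[RR]_N) (v : 'cV[RR]_N) :
  `|\sum_r ((A *m v) r ord0 * v r ord0 + v r ord0 * (A *m v) r ord0)|
    <= (2 * \sum_r \sum_l `|A r l|) * \sum_r v r ord0 ^+ 2.
Proof.
set E := \sum_r v r ord0 ^+ 2.
have hE r : v r ord0 ^+ 2 <= E by exact: (sq_le_sum (fun l => v l ord0)).
apply: le_trans (ler_norm_sum _ _ _) _.
rewrite mulrC mulrA big_distrr /=; apply: ler_sum => r _.
have -> : (A *m v) r ord0 * v r ord0 + v r ord0 * (A *m v) r ord0 =
    \sum_l 2 * (A r l * (v r ord0 * v l ord0)).
  rewrite mxE [v r ord0 * _]mulrC -mulr2n big_distrl /= -sumrMnl.
  by apply: eq_bigr => l _; ring.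
apply: le_trans (ler_norm_sum _ _ _) _.
rewrite big_distrr /=; apply: ler_sum => l _.
rewrite !normrM ger0_norm ?ler0n //.
have h := two_abs (v r ord0) (v l ord0).
have hA := normr_ge0 (A r l).
have hr := hE r; have hl := hE l.
have h2 : 2 * `|v r ord0| * `|v l ord0| <= E + E by lra.
set a := `|A r l|; set p := `|v r ord0|; set q := `|v l ord0|.
rewrite -/a -/p -/q in h2 hA. nra.
Qed.

Lemma lin_uniq (N : nat) (A : 'M[RR]_N) (u : RR -> 'cV[RR]_N) (a b : RR) :
  a < 0 < b -> u 0 = 0 ->
  (forall t, a < t < b -> forall r,
     derivable_pt_lim (fun s => u s r ord0) t ((A *m u t) r ord0)) ->
  forall t, a < t < b -> u t = 0.
Proof.
move=> /andP[a0 b0] u0 Hd t /andP[hat hbt].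
pose E s := \sum_r u s r ord0 ^+ 2.
pose dE s := \sum_r ((A *m u s) r ord0 * u s r ord0 + u s r ord0 * (A *m u s) r ord0).
pose C := 2 * \sum_r \sum_l `|A r l|.
have E0 s : 0 <= E s by apply: sumr_ge0 => r _; exact: sqr_ge0.
have E00 : E 0 = 0 by rewrite /E u0 big1 // => r _; rewrite mxE expr0n.
have Eb s : `|dE s| <= C * E s by exact: dE_bound.
have EbU s : dE s <= C * E s by apply: le_trans (Eb s); exact: ler_norm.
have EbL s : - (C * E s) <= dE s.
  by rewrite lerNl; apply: le_trans (Eb s); rewrite -normrN; exact: ler_norm.
have HE s : a < s < b -> derivable_pt_lim E s (dE s).
  move=> hs; apply: dpl_sum => r.
  apply: (dpl_ext _ _ (dpl_mul (Hd s hs r) (Hd s hs r))) => [s'|] //.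
have Et : E t = 0.
  case: (ltgtP t 0) => [tn|tp|->] //.
  - pose h s := E s * exp (C * s).
    pose dh s := dE s * exp (C * s) + E s * (C * exp (C * s)).
    have [c [hc [/RltP c1 /RltP c2]]] : exists c, h 0 - h t = dh c * (0 - t) /\ (t < c < 0)%R.
      apply: MVT_cor2; first exact/RltP.
      move=> c [/RleP c1 /RleP c2]; apply: dpl_mul; last exact: dpl_exp.
      apply: HE; apply/andP; split; first by apply: lt_le_trans c1.
      by apply: le_lt_trans c2 _.
    have ex0 : 0 < exp (C * c) by apply/RltP; exact: exp_pos.
    have ext : 0 < exp (C * t) by apply/RltP; exact: exp_pos.
    have : 0 <= dh c.
      have -> : dh c = exp (C * c) * (dE c + C * E c) by rewrite /dh; ring.
      apply: mulr_ge0; first exact: ltW.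
      have := EbL c; lra.
    have : h 0 = 0 by rewrite /h E00 mul0r.
    move=> h0 hdh; move: hc; rewrite h0 => hc.
    have : h t <= 0.
      have : 0 <= dh c * (0 - t) by apply: mulr_ge0 => //; lra.
      lra.
    rewrite /h => hle; apply/eqP; rewrite eq_le E0 andbT.
    by rewrite -(ler_pM2r ext) mul0r.
  - pose h s := E s * exp (- C * s).
    pose dh s := dE s * exp (- C * s) + E s * (- C * exp (- C * s)).
    have [c [hc [/RltP c1 /RltP c2]]] : exists c, h t - h 0 = dh c * (t - 0) /\ (0 < c < t)%R.
      apply: MVT_cor2; first exact/RltP.
      move=> c [/RleP c1 /RleP c2]; apply: dpl_mul; last exact: dpl_exp.
      apply: HE; apply/andP; split; first by apply: lt_le_trans c1.
      by apply: le_lt_trans c2 _.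
    have ex0 : 0 < exp (- C * c) by apply/RltP; exact: exp_pos.
    have ext : 0 < exp (- C * t) by apply/RltP; exact: exp_pos.
    have : dh c <= 0.
      have -> : dh c = (dE c - C * E c) * exp (- C * c) by rewrite /dh; ring.
      apply: mulr_le0_ge0; last exact: ltW.
      have := EbU c; lra.
    have : h 0 = 0 by rewrite /h E00 mul0r.
    move=> h0 hdh; move: hc; rewrite h0 => hc.
    have : h t <= 0.
      have : dh c * (t - 0) <= 0 by apply: mulr_le0_ge0 => //; lra.
      lra.
    rewrite /h => hle; apply/eqP; rewrite eq_le E0 andbT.
    by rewrite -(ler_pM2r ext) mul0r.
apply/matrixP => r j; rewrite (ord1 j) mxE.
have : E t == 0 by rewrite Et.
rewrite /E psumr_eq0; last by move=> i _; exact: sqr_ge0.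
move/allP => /(_ r (mem_index_enum _)) /=.
by rewrite sqrf_eq0 => /eqP.
Qed.

Definition ev (n : nat) (f : polyVF n) (k : 'I_#|Obs f|) : 'X_{1..n} := mo (enum_val k).

Definition obsv (n : nat) (f : polyVF n) (x : 'cV[RR]_n) : 'cV[RR]_#|Obs f| :=
  \col_k meval (fun i => x i ord0) 'X_[ev k].

Definition Atop (n : nat) (f : polyVF n) : 'M[RR]_(n, #|Obs f|) :=
  \matrix_(j, k) (f j)@_(ev k).

Definition Abot (n : nat) (f : polyVF n) : 'M[RR]_(#|Obs f|, #|Obs f|) :=
  \matrix_(k, l) (Lf f (ev k))@_(ev l).

Definition Am (n : nat) (f : polyVF n) : 'M[RR]_(n + #|Obs f|) :=
  block_mx 0 (Atop f) 0 (Abot f).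

Lemma meval_expand (n : nat) (f : polyVF n) (q : {mpoly RR[n]}) v :
  (forall m, m \in msupp q -> (wd f m <= Wm f)%nat) ->
  meval v q = \sum_(k < #|Obs f|) q@_(ev k) * meval v 'X_[ev k].
Proof.
move=> H; rewrite {1}(obs_expand H) raddf_sum /=.
rewrite (big_enum_val (A := predT)) /=.
by apply: eq_bigr => k _; rewrite mevalZ.
Qed.

Lemma obsv_inj (n : nat) (f : polyVF n) : injective (@obsv n f).
Proof.
move=> x y E; apply/matrixP => i j; rewrite (ord1 j).
have hw : (wd f U_(i)%MM <= Wm f)%nat.
  by rewrite wdU /Wm; exact: (leq_bigmax_cond i isT).
have [o ho] := obs_complete hw.
move/matrixP: E => /(_ (enum_rank o) ord0).
by rewrite /obsv !mxE /ev enum_rankK ho !mevalXU.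
Qed.

Lemma fj_supp (n : nat) (f : polyVF n) :
  (forall c : seq 'I_n, is_cycle f c ->
     exists k : RR, forall x : 'I_n -> RR, cycle_weight f c x = k) ->
  forall j m, m \in msupp (f j) -> (wd f m <= Wm f)%nat.
Proof.
move=> Hc j m hm; apply: leq_trans (W_bound Hc hm) _.
exact: (leq_bigmax_cond j isT).
Qed.

Lemma zh_deriv (n : nat) (f : polyVF n) :
  (forall c : seq 'I_n, is_cycle f c ->
     exists k : RR, forall x : 'I_n -> RR, cycle_weight f c x = k) ->
  forall (x : RR -> 'cV[RR]_n) s,
  (forall i : 'I_n, derivable_pt_lim (fun s => x s i ord0) s (evalVF f (x s) i ord0)) ->
  forall r, derivable_pt_lim (fun s => col_mx (x s) (obsv f (x s)) r ord0) s
              ((Am f *m col_mx (x s) (obsv f (x s))) r ord0).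
Proof.
move=> Hc x s Hx r.
rewrite /Am mul_block_col !mul0mx !add0r.
case: (splitP r) => [j rj|k rk].
  have -> : r = lshift _ j by apply: val_inj.
  apply: (dpl_ext _ _ (Hx j)) => [s'|]; first by rewrite col_mxEu.
  rewrite col_mxEu /evalVF !mxE (meval_expand _ (fj_supp Hc (j := j))).
  by apply: eq_bigr => k _; rewrite !mxE.
have -> : r = rshift n k by apply: val_inj.
have := CR (y := fun s i => x s i ord0) Hx ('X_[ev k]).
apply: dpl_ext => [s'|]; first by rewrite col_mxEd mxE.
rewrite col_mxEd mxE.
have -> : \sum_(i < n) ('X_[ev k])^`M(i).@[fun i0 : 'I_n => x s i0 ord0] *
     evalVF f (x s) i ord0 = meval (fun i0 => x s i0 ord0) (Lf f (ev k)).
  rewrite /Lf raddf_sum /=; apply: eq_bigr => i _.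
  by rewrite mevalM /evalVF mxE.
rewrite (meval_expand (f := f) (q := Lf f (ev k))).
  by apply: eq_bigr => l _; rewrite !mxE.
move=> m hm; apply: leq_trans (Lf_supp Hc hm) _; exact: mo_wd.
Qed.

Unset Implicit Arguments.
Theorem theorem1 (n : nat) (f : polyVF n) :
  (forall c : seq 'I_n, is_cycle f c ->
     exists k : RR, forall x : 'I_n -> RR, cycle_weight f c x = k) ->
  super_linearizable f.
Proof.
move=> Hc.
exists #|Obs f|, (Am f), 0, (@obsv n f); split; first exact: obsv_inj.
move=> x0 z z0 Hz x a b hab hx0 Hx t ht.
pose zh s := col_mx (x s) (obsv f (x s)).
have U := lin_uniq (u := fun s => z s - zh s) hab.
have : z t - zh t = 0.
  apply: U => //.
    by rewrite z0 /zh hx0 subrr.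
  move=> s hs r.
  have hz : derivable_pt_lim (fun s => z s r ord0) s ((Am f *m z s + 0) r ord0).
    by apply: (Hz s); rewrite gtrBl ltrDl ltr01.
  have hzh := zh_deriv Hc (x := x) (s := s) (fun i => Hx s hs i) r.
  apply: (dpl_ext _ _ (dpl_sub hz hzh)) => [s'|]; first by rewrite !mxE.
  by rewrite addr0 mulmxBr !mxE.
move/eqP; rewrite subr_eq0 => /eqP ->.
by rewrite /proj_first /zh col_mxKu.
Qed.
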